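(* The subsumption relation $\sqsubseteq$ on models over a fixed signature ($M\sqsubseteq M'$ iff there is a homomorphism $M\to M'$) is reflexive and transitive, and it is antisymmetric up to isomorphism: if $M\sqsubseteq M'$ and $M'\sqsubseteq M$ then $M$ and $M'$ are isomorphic. Hence $\sqsubseteq$ induces a partial order on isomorphism classes of models.
   Context: Signature: finite set of types $\mathsf{TYPE}$, finite set of attributes $\mathsf{ATTR}$, relation symbols $\mathsf{REL}=\bigcup_{m>1}\mathsf{REL}_m$, a set $\mathsf{NNAME}$ of base-labels, a set $\mathsf{NVAR}$ of node variables and a set $\mathsf{WVAR}$ of wrapping variables (pairwise disjoint); node labels are $\mathsf{NLABEL}=\mathsf{NNAME}\uplus\mathsf{NVAR}$. A Feature Structure with Wrappings (FSW) is $F=\langle V,\mathcal W,\mathcal I\rangle$ where $V$ is a nonempty set of nodes, $\mathcal W$ is a set of pairwise disjoint nonempty subsets of $V$ (the wrappings, with $\mathcal W\cap V=\emptyset$), and $\mathcal I$ maps each type $t$ to a subset $\mathcal I(t)\subseteq V$, each attribute $\mathsf P$ to a partial function $\mathcal I(\mathsf P)$ from $V$ to $V\cup\mathcal W$, each $m$-ary relation symbol $r$ to a subset of $(V\cup\mathcal W)^m$, and is a partial map from $\mathsf{NNAME}$ to $V$. The w-sets are the elements of $\hat{\mathcal W}=\mathcal W\cup\{V\setminus\bigcup\mathcal W\}$, a partition of $V$; $[v]$ denotes the w-set containing $v$. A model is $M=\langle F,g\rangle$ with $g=\langle g_N,g_W\rangle$, $g_N:\mathsf{NVAR}\rightharpoonup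 V$, $g_W:\mathsf{WVAR}\rightharpoonup\mathcal W$. Write $\mathcal I_g(b)=\mathcal I(b)$ for base-labels, $\mathcal I_g(x)=g_N(x)$, $\mathcal I_g(T)=g_W(T)$, and $\mathcal I_g(k,\varepsilon)=\mathcal I_g(k)$, $\mathcal I_g(k,p\mathsf Q)=\mathcal I(\mathsf Q)(\mathcal I_g(k,p))$ for attribute words $p\in\mathsf{ATTR}^*$ (partial). Models are required to satisfy: (reachability) for every $v\in V$ there are $k\in\mathsf{NLABEL}$ and $p\in\mathsf{ATTR}^*$ with $\mathcal I_g(k)\in[v]$ and $\mathcal I_g(k,p)=v$; (non-escapability) for every $W\in\mathcal W$, $v\in W$ and $p\in\mathsf{ATTR}^*$, if $\mathcal I(p)(v)$ is defined then it lies in $[v]$. A homomorphism $h:M\to M'$ is a pair $h_V:V\to V'\uplus\mathcal W'$, $h_{\mathcal W}:\mathcal W\to\mathcal W'$ such that, writing $h$ for both (and extending it to $V\cup\mathcal W$): $h(\mathcal I(t))\subseteq\mathcal I'(t)$ for all types; if $\mathcal I(\mathsf P)(v)$ is defined then $\mathcal I'(\mathsf P)(h(v))$ is defined and equals $h(\mathcal I(\mathsf P)(v))$; $h(\mathcal I(r))\subseteq\mathcal I'(r)$ for all relations; if $\mathcal I(b)$ is defined then $h(\mathcal I(b))=\mathcal I'(b)$; if $v\in W\in\mathcal W$ then $h_V(v)\in h_{\mathcal W}(W)$; if $g(x)$ is defined (for $x\in\mathsf{NVAR}\uplus\mathsf{WVAR}$) then $h(g(x))=g'(x)$. An isomorphism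 $\sigma:M\to M'$ is a homomorphism with $\sigma_V(V)\subseteq V'$, such that $\sigma_V:V\to V'$ and $\sigma_{\mathcal W}:\mathcal W\to\mathcal W'$ are bijections and $\sigma^{-1}=\langle\sigma_V^{-1},\sigma_{\mathcal W}^{-1}\rangle$ is a homomorphism $M'\to M$. *)

(* Defs.v *)
From Stdlib Require Import List.
Import ListNotations.
Set Implicit Arguments.

(* A signature: finite TYPE and ATTR, relation symbols of each arity m > 1,
   base-labels, node variables and wrapping variables (pairwise disjoint
   because they are distinct types). *)
Record Signature := {
  TYPE : Type;
  ATTR : Type;
  REL : nat -> Type;
  NNAME : Type;
  NVAR : Type;
  WVAR : Type;
  TYPE_finite : exists l : list TYPE, forall t, In t l;
  ATTR_finite : exists l : list ATTR, forall a, In a l;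
  REL_arity : forall m, REL m -> 1 < m
}.

Definition NLABEL (S : Signature) : Type := (NNAME S + NVAR S)%type.

(* The node set V is the carrier type
   [node]; wrappings are the elements of the type [wrap], each denoting the
   subset [fun v => inw v w] of V.  Elements of V u W are [node + wrap]. *)
Record Model (S : Signature) := {
  node : Type;
  wrap : Type;
  inw : node -> wrap -> Prop;
  node_nonempty : inhabited node;
  wrap_nonempty : forall w, exists v, inw v w;
  wrap_disjoint : forall v w1 w2, inw v w1 -> inw v w2 -> w1 = w2;
  Ity : TYPE S -> node -> Prop;
  Iattr : ATTR S -> node -> option (node + wrap);
  Irel : forall m, REL S m -> list (node + wrap) -> Prop;
  Irel_len : forall m (r : REL S m) l, Irel m r l -> length l = m;
  Ibase : NNAME S -> option node;
  gN : NVAR S -> option node;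
  gW : WVAR S -> option wrap
}.

Arguments node {S} _.
Arguments wrap {S} _.
Arguments inw {S} _ _ _.
Arguments Ity {S} _ _ _.
Arguments Iattr {S} _ _ _.
Arguments Irel {S} _ {m} _ _.
Arguments Ibase {S} _ _.
Arguments gN {S} _ _.
Arguments gW {S} _ _.

Section Semantics.
Variable S : Signature.
Variable M : Model S.

Definition Ipath_from (x : node M + wrap M) (p : list (ATTR S))
  : option (node M + wrap M) :=
  fold_left (fun acc Q => match acc with
                          | Some (inl v) => Iattr M Q v
                          | _ => None end) p (Some x).

Definition Ilabel (k : NLABEL S) : option (node M) :=
  match k with inl b => Ibase M b | inr x => gN M x end.

Definition Ilabel_path (k : NLABEL S) (p : list (ATTR S))
  : option (node M + wrap M) :=
  match Ilabel k with Some v => Ipath_from (inl v) p | None => None end.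

(* u and v lie in the same w-set (the w-sets partition V: the wrappings and
   the set of nodes in no wrapping) *)
Definition same_wset (u v : node M) : Prop :=
  (exists w, inw M u w /\ inw M v w) \/
  ((forall w, ~ inw M u w) /\ (forall w, ~ inw M v w)).

Definition reachable : Prop :=
  forall v : node M, exists (k : NLABEL S) (p : list (ATTR S)) (u : node M),
    Ilabel k = Some u /\ same_wset u v /\ Ilabel_path k p = Some (inl v).

Definition non_escapable : Prop :=
  forall (w : wrap M) (v : node M) (p : list (ATTR S)) x,
    inw M v w -> Ipath_from (inl v) p = Some x ->
    exists u, x = inl u /\ inw M u w.

Definition wf_model : Prop := reachable /\ non_escapable.
End Semantics.

Arguments wf_model {S} _.

Definition hext {S} {M M' : Model S} (hV : node M -> node M' + wrap M')
  (hW : wrap M -> wrap M') (x : node M + wrap M) : node M' + wrap M' :=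
  match x with inl v => hV v | inr w => inr (hW w) end.

Definition is_hom {S} (M M' : Model S) (hV : node M -> node M' + wrap M')
  (hW : wrap M -> wrap M') : Prop :=
  (forall t v, Ity M t v -> exists u, hV v = inl u /\ Ity M' t u) /\
  (forall P v x, Iattr M P v = Some x ->
     exists u, hV v = inl u /\ Iattr M' P u = Some (hext hV hW x)) /\
  (forall m (r : REL S m) l, Irel M r l -> Irel M' r (map (hext hV hW) l)) /\
  (forall b v, Ibase M b = Some v -> exists u, hV v = inl u /\ Ibase M' b = Some u) /\
  (forall v w, inw M v w -> exists u, hV v = inl u /\ inw M' u (hW w)) /\
  (forall x v, gN M x = Some v -> exists u, hV v = inl u /\ gN M' x = Some u) /\
  (forall T w, gW M T = Some w -> gW M' T = Some (hW w)).

Definition subsumes {S} (M M' : Model S) : Prop :=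
  exists hV hW, is_hom M M' hV hW.

Definition isomorphic {S} (M M' : Model S) : Prop :=
  exists (f : node M -> node M') (g : node M' -> node M)
         (fW : wrap M -> wrap M') (gW : wrap M' -> wrap M),
    (forall v, g (f v) = v) /\ (forall v', f (g v') = v') /\
    (forall w, gW (fW w) = w) /\ (forall w', fW (gW w') = w') /\
    is_hom M M' (fun v => inl (f v)) fW /\
    is_hom M' M (fun v' => inl (g v')) gW.

(* Main.v *)
Require Import Defs.
From Stdlib Require Import List ClassicalEpsilon.
Import ListNotations.
Set Implicit Arguments.

Section Aux.
Variable S : Signature.

Lemma fold_none (M : Model S) p :
  fold_left (fun acc Q => match acc with
                          | Some (inl v) => Iattr M Q v
                          | _ => None end) p (@None (node M + wrap M)) = None.
Proof. induction p; simpl; auto. Qed.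

Lemma path_hom (M M' : Model S) hV hW : is_hom M M' hV hW ->
  forall p x y, Ipath_from M x p = Some y ->
   Ipath_from M' (hext hV hW x) p = Some (hext hV hW y).
Proof.
  intros [_ [HA _]] p. induction p as [|P p IH]; intros x y H.
  - simpl in *. inversion H; auto.
  - unfold Ipath_from in *. simpl in *. destruct x as [v|w].
    + destruct (Iattr M P v) as [z|] eqn:E.
      * destruct (HA _ _ _ E) as [u [Hu Hu']]. simpl. rewrite Hu. simpl.
        rewrite Hu'. apply IH. exact H.
      * rewrite fold_none in H. discriminate.
    + rewrite fold_none in H. discriminate.
Qed.

Lemma label_hom (M M' : Model S) hV hW : is_hom M M' hV hW ->
  forall k p y, Ilabel_path M k p = Some y ->
   Ilabel_path M' k p = Some (hext hV hW y).
Proof.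
  intros Hh k p y H. unfold Ilabel_path in *.
  destruct (Ilabel M k) as [u|] eqn:E; [|discriminate].
  assert (exists u', hV u = inl u' /\ Ilabel M' k = Some u') as [u' [H1 H2]].
  { destruct Hh as [_ [_ [_ [HB [_ [HG _]]]]]].
    destruct k; simpl in *; [apply HB | apply HG]; auto. }
  rewrite H2, <- H1. change (hV u) with (hext hV hW (inl u)).
  eapply path_hom; eauto.
Qed.

Lemma hom_ext (M M' : Model S) hV hV' hW :
  (forall v, hV v = hV' v) -> is_hom M M' hV hW -> is_hom M M' hV' hW.
Proof.
  intros E H.
  assert (EX : forall x, hext hV hW x = hext hV' hW x)
    by (intros [v|w]; simpl; auto).
  destruct H as [H1 [H2 [H3 [H4 [H5 [H6 H7]]]]]].
  repeat split; intros.
  - destruct (H1 _ _ H) as [u [? ?]]; exists u; rewrite <- E; auto.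
  - destruct (H2 _ _ _ H) as [u [? ?]]; exists u; rewrite <- E, <- EX; auto.
  - erewrite map_ext; [apply H3; eauto|]. intros; auto.
  - destruct (H4 _ _ H) as [u [? ?]]; exists u; rewrite <- E; auto.
  - destruct (H5 _ _ H) as [u [? ?]]; exists u; rewrite <- E; auto.
  - destruct (H6 _ _ H) as [u [? ?]]; exists u; rewrite <- E; auto.
  - auto.
Qed.

Definition compV (M1 M2 M3 : Model S) (h1 : node M1 -> node M2 + wrap M2)
  (h2 : node M2 -> node M3 + wrap M3) (g2 : wrap M2 -> wrap M3) v :=
  hext h2 g2 (h1 v).

Lemma comp_hom (M1 M2 M3 : Model S) h1 g1 h2 g2 :
  is_hom M1 M2 h1 g1 -> is_hom M2 M3 h2 g2 ->
  is_hom M1 M3 (@compV M1 M2 M3 h1 h2 g2) (fun w => g2 (g1 w)).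
Proof.
  intros [A1 [A2 [A3 [A4 [A5 [A6 A7]]]]]] [B1 [B2 [B3 [B4 [B5 [B6 B7]]]]]].
  unfold compV.
  assert (EX : forall x, hext (fun v => hext h2 g2 (h1 v)) (fun w => g2 (g1 w)) x
                         = hext h2 g2 (hext h1 g1 x))
    by (intros [v|w]; simpl; auto).
  repeat split; intros.
  - destruct (A1 _ _ H) as [u [E ?]]; rewrite E; simpl; eauto.
  - destruct (A2 _ _ _ H) as [u [E ?]]; rewrite E; simpl.
    destruct (B2 _ _ _ H0) as [u' [E' ?]]; exists u'; rewrite EX; auto.
  - erewrite map_ext; [|intros; apply EX]. rewrite <- map_map. auto.
  - destruct (A4 _ _ H) as [u [E ?]]; rewrite E; simpl; eauto.
  - destruct (A5 _ _ H) as [u [E ?]]; rewrite E; simpl; eauto.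
  - destruct (A6 _ _ H) as [u [E ?]]; rewrite E; simpl; eauto.
  - auto.
Qed.

Lemma id_hom (M : Model S) : is_hom M M (fun v => inl v) (fun w => w).
Proof.
  assert (EX : forall x, hext (M:=M) (M':=M) (fun v => inl v) (fun w => w) x = x)
    by (intros [v|w]; simpl; auto).
  repeat split; intros; eauto.
  - exists v; rewrite EX; auto.
  - rewrite map_ext with (g := fun x => x) by auto. rewrite map_id. auto.
Qed.

Lemma endo_fix (M : Model S) hV hW : reachable M -> is_hom M M hV hW ->
  forall v, hV v = inl v.
Proof.
  intros R H v. destruct (R v) as [k [p [u [_ [_ Hp]]]]].
  pose proof (label_hom H _ _ Hp). rewrite Hp in H0. simpl in H0.
  inversion H0; auto.
Qed.

Lemma antisym (M M' : Model S) : wf_model M -> wf_model M' ->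
  subsumes M M' -> subsumes M' M -> isomorphic M M'.
Proof.
  intros [R _] [R' _] [h [hw H]] [h' [hw' H']].
  pose proof (endo_fix R (comp_hom H H')) as F1.
  pose proof (endo_fix R' (comp_hom H' H)) as F2.
  unfold compV in *.
  destruct (node_nonempty M) as [d]. destruct (node_nonempty M') as [d'].
  set (f := fun v => match h v with inl u => u | inr _ => d' end).
  set (g := fun v => match h' v with inl u => u | inr _ => d end).
  assert (Hf : forall v, h v = inl (f v)).
  { intros v; specialize (F1 v); unfold f; destruct (h v); simpl in *; [reflexivity|discriminate]. }
  assert (Hg : forall v, h' v = inl (g v)).
  { intros v; specialize (F2 v); unfold g; destruct (h' v); simpl in *; [reflexivity|discriminate]. }
  assert (GF : forall v, g (f v) = v).
  { intros v; specialize (F1 v); rewrite Hf in F1; simpl in F1; rewrite Hg in F1;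
    now injection F1. }
  assert (FG : forall v, f (g v) = v).
  { intros v; specialize (F2 v); rewrite Hg in F2; simpl in F2; rewrite Hf in F2;
    now injection F2. }
  exists f, g, hw, hw'. split; [exact GF|]. split; [exact FG|].
  split; [|split; [|split]].
  - intros w. destruct (wrap_nonempty M w) as [v Hv].
    destruct H as [_ [_ [_ [_ [H5 _]]]]]. destruct H' as [_ [_ [_ [_ [H5' _]]]]].
    destruct (H5 _ _ Hv) as [u [E Hu]]. destruct (H5' _ _ Hu) as [u' [E' Hu']].
    rewrite Hf in E; inversion E; subst. rewrite Hg, GF in E'. inversion E'; subst.
    eapply wrap_disjoint; eauto.
  - intros w. destruct (wrap_nonempty M' w) as [v Hv].
    destruct H as [_ [_ [_ [_ [H5 _]]]]]. destruct H' as [_ [_ [_ [_ [H5' _]]]]].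
    destruct (H5' _ _ Hv) as [u [E Hu]]. destruct (H5 _ _ Hu) as [u' [E' Hu']].
    rewrite Hg in E; inversion E; subst. rewrite Hf, FG in E'. inversion E'; subst.
    eapply wrap_disjoint; eauto.
  - eapply hom_ext; [|exact H]. auto.
  - eapply hom_ext; [|exact H']. auto.
Qed.

End Aux.

Theorem mainTheorem3 (S : Signature) :
  (forall M : Model S, wf_model M -> subsumes M M) /\
  (forall M1 M2 M3 : Model S, wf_model M1 -> wf_model M2 -> wf_model M3 ->
     subsumes M1 M2 -> subsumes M2 M3 -> subsumes M1 M3) /\
  (forall M M' : Model S, wf_model M -> wf_model M' ->
     subsumes M M' -> subsumes M' M -> isomorphic M M') /\
  (forall M M' : Model S, wf_model M -> wf_model M' ->
     isomorphic M M' -> subsumes M M' /\ subsumes M' M).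
Proof.
  split; [|split; [|split]].
  - intros M _. exists (fun v => inl v), (fun w => w). apply id_hom.
  - intros M1 M2 M3 _ _ _ [h1 [g1 H1]] [h2 [g2 H2]].
    eexists; eexists; apply (comp_hom H1 H2).
  - apply antisym.
  - intros M M' _ _ [f [g [fW [gW' [_ [_ [_ [_ [H1 H2]]]]]]]]].
    split; eexists; eexists; eauto.
Qed.
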